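(* Let $r$ be an odd prime and $\mu_i=(-1)^iA_r^{i(i+2)}$. If $0\le i<j\le\frac{r-3}{2}$, then $\mu_i^2-\mu_j^2\sim\mu_i-\mu_j\sim 1-A_r^2$.
   Context: $\alpha_r=e^{2\pi i/(4r)}$, $A_r=\alpha_r^2$; $\mathcal{O}_r=\mathbb{Z}[A_r]$ if $r\equiv-1\pmod 4$ and $\mathcal{O}_r=\mathbb{Z}[\alpha_r]$ if $r\equiv 1\pmod 4$. $a\sim b$ means $a/b$ is a unit of $\mathcal{O}_r$. *)

(* Defs.v *)
From mathcomp Require Import all_boot all_order all_algebra all_field.
Set Implicit Arguments. Unset Strict Implicit. Unset Printing Implicit Defensive.
Import GRing.Theory Num.Theory.
Local Open Scope ring_scope.

(* alpha_r = e^{2 pi i/(4r)}: in algC, n.-root (-1) is the (2n)-th root of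
   unity with minimal non-negative argument, i.e. e^{i pi / n}. *)
Definition alpha_r (r : nat) : algC := (2 * r)%N.-root (-1).
Definition A_r (r : nat) : algC := alpha_r r ^+ 2.

Definition O_gen (r : nat) : algC :=
  if (r %% 4 == 1)%N then alpha_r r else A_r r.

Definition in_Zadj (g z : algC) : Prop :=
  exists p : {poly int}, z = (map_poly (fun n : int => n%:~R) p).[g].

Definition in_O (r : nat) (z : algC) : Prop := in_Zadj (O_gen r) z.

Definition unit_O (r : nat) (u : algC) : Prop :=
  u != 0 /\ in_O r u /\ in_O r u^-1.

Definition assoc_O (r : nat) (a b : algC) : Prop :=
  b != 0 /\ unit_O r (a / b).

Definition mu_r (r i : nat) : algC := (-1) ^+ i * A_r r ^+ (i * (i + 2)).

(* Main.v *)
Require Import Defs.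
From mathcomp Require Import all_boot all_order all_algebra all_field.
From mathcomp Require Import zify.
Set Implicit Arguments. Unset Strict Implicit. Unset Printing Implicit Defensive.
Import Order.TTheory GRing.Theory Num.Theory.
Local Open Scope ring_scope.

Lemma alpha_pow r : (0 < r)%N -> alpha_r r ^+ (2 * r) = -1.
Proof. by move=> r0; rewrite /alpha_r rootCK // muln_gt0. Qed.

Lemma exists_good_root r : prime r -> odd r ->
  exists y : algC, [/\ y ^+ (2 * r) = -1, 0 <= 'Im y & 0 < 'Re y].
Proof.
move=> pr odr; have r1 := prime_gt1 pr; have r0 := prime_gt0 pr.
have [w pw] := C_prim_root_exists r0.
have wr : w ^+ r = 1 by exact: prim_expr_order pw.
have nreal : 'Im w != 0.
  apply/eqP=> /Creal_ImP wR.
  have : (w ^+ 2) ^+ r == 1 by rewrite -exprM mulnC exprM wr expr1n.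
  rewrite pexpr_eq1 // ?real_exprn_even_ge0 // -(prim_order_dvd pw).
  move/(dvdn_leq (isT : (0 < 2)%N)) => r2.
  have : r = 2%N by apply/eqP; rewrite eqn_leq r2 r1.
  by move=> r2'; rewrite r2' in odr.
pose y0 := 'i * w.
have y0N : y0 ^+ (2 * r) = -1.
  by rewrite /y0 exprMn exprM sqrCi mulnC exprM wr expr1n mulr1 -signr_odd odr expr1.
have Rey0 : 'Re y0 != 0 by rewrite /y0 ReMil oppr_eq0.
pose y1 := if 0 < 'Re y0 then y0 else - y0.
have y1N : y1 ^+ (2 * r) = -1.
  by rewrite /y1; case: ifP => // _; rewrite exprM sqrrN -exprM.
have Rey1 : 0 < 'Re y1.
  rewrite /y1; case: ifP => // /negbT; rewrite raddfN /= oppr_gt0.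
  by rewrite -real_leNgt ?Creal_Re ?real0 // le_eqVlt (negbTE Rey0).
exists (if 0 <= 'Im y1 then y1 else y1^*).
case: ifP => [-> | /negbT h]; first by split.
split.
- by rewrite -rmorphXn y1N rmorphN rmorph1.
- rewrite Im_conj oppr_ge0; move: h; rewrite -real_ltNge ?Creal_Im ?real0 //.
  exact: ltW.
- by rewrite Re_conj.
Qed.

Lemma alpha_not4 r : prime r -> odd r -> alpha_r r ^+ 4 != 1.
Proof.
move=> pr odr; have r0 := prime_gt0 pr.
have [y [yN yI yR]] := exists_good_root pr odr.
have Rge : 'Re y <= 'Re (alpha_r r).
  by apply: rootC_Re_max => //; rewrite muln_gt0.
apply/eqP=> a4.
have a2 : alpha_r r ^+ 2 = -1.
  have e : (2 * r = 4 * r./2 + 2)%N.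
    by rewrite -{1}(odd_double_half r) odr -muln2 /=; lia.
  by rewrite -(alpha_pow r0) e exprD exprM a4 expr1n mul1r.
have : (alpha_r r - 'i) * (alpha_r r + 'i) = 0.
  by rewrite -subr_sqr a2 sqrCi subrr.
move/eqP; rewrite mulf_eq0 subr_eq0 addr_eq0 => /orP[] /eqP ea.
  by move: Rge; rewrite ea Re_i => /(lt_le_trans yR); rewrite ltxx.
by move: Rge; rewrite ea raddfN /= Re_i oppr0 => /(lt_le_trans yR); rewrite ltxx.
Qed.

Lemma w_prim r : prime r -> odd r -> r.-primitive_root (A_r r ^+ 2).
Proof.
move=> pr odr; have r0 := prime_gt0 pr.
have wr : (A_r r ^+ 2) ^+ r = 1.
  by rewrite /A_r -!exprM mulnC exprM alpha_pow // sqrrN expr1n.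
have [m pm mr] := prim_order_exists r0 wr.
have /primeP [_ hm] := pr; move: mr => /hm /orP[] /eqP em; last by rewrite em in pm.
move: pm; rewrite em => pm; have := prim_expr_order pm.
rewrite expr1 /A_r -exprM => e; by move: (alpha_not4 pr odr); rewrite e eqxx.
Qed.

Section Zadj.
Variable g : algC.
Lemma Zadj_X n : in_Zadj g (g ^+ n).
Proof. by exists 'X^n; rewrite map_polyXn hornerXn. Qed.
Lemma Zadj_1 : in_Zadj g 1.
Proof. by exists 1; rewrite rmorph1 hornerC. Qed.
Lemma Zadj_D x y : in_Zadj g x -> in_Zadj g y -> in_Zadj g (x + y).
Proof. by move=> [p ->] [q ->]; exists (p + q); rewrite rmorphD hornerD. Qed.
Lemma Zadj_N x : in_Zadj g x -> in_Zadj g (- x).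
Proof. by move=> [p ->]; exists (- p); rewrite rmorphN hornerN. Qed.
Lemma Zadj_M x y : in_Zadj g x -> in_Zadj g y -> in_Zadj g (x * y).
Proof. by move=> [p ->] [q ->]; exists (p * q); rewrite rmorphM hornerM. Qed.
Lemma Zadj_B x y : in_Zadj g x -> in_Zadj g y -> in_Zadj g (x - y).
Proof. by move=> hx hy; apply: Zadj_D => //; apply: Zadj_N. Qed.
Lemma Zadj_sum n (F : nat -> algC) : (forall i, in_Zadj g (F i)) ->
  in_Zadj g (\sum_(i < n) F i).
Proof.
move=> hF; apply: (big_ind (in_Zadj g)) => [|x y|i _].
- by exists 0; rewrite rmorph0 horner0.
- exact: Zadj_D.
- exact: hF.
Qed.
End Zadj.

Lemma O_A r n : in_O r (A_r r ^+ n).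
Proof.
rewrite /in_O /O_gen; case: ifP => _; last exact: Zadj_X.
by rewrite /A_r -exprM; apply: Zadj_X.
Qed.

Lemma O_X r x n : in_O r x -> in_O r (x ^+ n).
Proof.
move=> hx; elim: n => [|n IH]; first by rewrite expr0; apply: Zadj_1.
by rewrite exprS; apply: Zadj_M.
Qed.

Lemma geo r y z : in_O r y -> r.-primitive_root y -> z ^+ r = 1 ->
  exists2 S, in_O r S & (1 - y) * S = 1 - z.
Proof.
move=> Oy py zr; have [i ->] := prim_rootP py zr.
exists (\sum_(k < i) y ^+ k); first by apply: Zadj_sum => k; apply: O_X.
by rewrite -opprB mulNr -subrX1 opprB.
Qed.

Lemma unitO r u v : in_O r u -> in_O r v -> u * v = 1 -> unit_O r u.
Proof.
move=> Ou Ov uv; have u0 : u != 0 by apply: contra_eq_neq uv => ->; rewrite mul0r eq_sym oner_eq0.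
split=> //; split=> //.
suff -> : u^-1 = v by [].
by rewrite -[u^-1]mulr1 -uv mulKf.
Qed.

Lemma assocO r a b u : b != 0 -> a = u * b -> unit_O r u -> assoc_O r a b.
Proof. by move=> b0 -> hu; split=> //; rewrite mulfK. Qed.

Definition fexp (r n : nat) : nat := (n * (n + r + 2)) %/ 2.

Lemma fexp_even r n : odd r -> (fexp r n * 2 = n * (n + r + 2))%N.
Proof.
move=> odr; rewrite /fexp divnK // dvdn2 oddM !oddD odr /=.
by case: (odd n).
Qed.

Lemma A_r_r r : (0 < r)%N -> A_r r ^+ r = -1.
Proof. by move=> r0; rewrite /A_r -exprM alpha_pow. Qed.

Lemma mu_eq r n : prime r -> odd r -> mu_r r n = (A_r r ^+ 2) ^+ fexp r n.
Proof.
move=> pr odr; rewrite /mu_r -(A_r_r (prime_gt0 pr)) -!exprM -exprD.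
congr (_ ^+ _); have h := @fexp_even r n odr; nia.
Qed.

Theorem lemma7p1 (r i j : nat) :
  prime r -> odd r -> (i < j)%N -> (j <= (r - 3) %/ 2)%N ->
  assoc_O r (mu_r r i ^+ 2 - mu_r r j ^+ 2) (mu_r r i - mu_r r j) /\
  assoc_O r (mu_r r i - mu_r r j) (1 - A_r r ^+ 2).
Proof.
move=> pr odr ij jr.
have r0 := prime_gt0 pr; have r1 := prime_gt1 pr.
move: jr; rewrite leq_divRL // => jr.
have Hi := @fexp_even r i odr; have Hj := @fexp_even r j odr.
set fi := fexp r i in Hi *; set fj := fexp r j in Hj *.
have fij : (fi <= fj)%N by nia.
set m := (fj - fi)%N.
have m2 : (m * 2 = (j - i) * (j + i + 2 + r))%N by rewrite /m; nia.
have nd : ~~ (r %| m)%N.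
  apply/negP=> rm; have : (r %| m * 2)%N by apply: dvdn_mulr.
  rewrite m2 Euclid_dvdM // => /orP[] h.
    have := dvdn_leq _ h; rewrite subn_gt0 => /(_ ij); lia.
  move: h; rewrite dvdn_addl // => h; have := dvdn_leq _ h; lia.
have cm : coprime m r by rewrite coprime_sym prime_coprime.
set w := A_r r ^+ 2.
have pw : r.-primitive_root w by apply: w_prim.
have wr : w ^+ r = 1 := prim_expr_order pw.
have w1 : w != 1.
  by apply/negP => /eqP e; move: (prim_order_dvd pw 1); rewrite expr1 e eqxx dvdn1; lia.
have Ow : forall n, in_O r (w ^+ n) by move=> n; rewrite /w -exprM; apply: O_A.
set x := w ^+ m.
have px : r.-primitive_root x by rewrite /x prim_root_exp_coprime.
have px2 : r.-primitive_root (x ^+ 2).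
  by rewrite /x -exprM prim_root_exp_coprime // coprimeMl cm coprime2n.
have xr : x ^+ r = 1 := prim_expr_order px.
have x1 : x != 1.
  by apply/negP => /eqP e; move: (prim_order_dvd px 1); rewrite expr1 e eqxx dvdn1; lia.
have mui : mu_r r i = w ^+ fi by rewrite mu_eq.
have muj : mu_r r j = w ^+ fi * x by rewrite mu_eq // /x -exprD subnKC.
have Omui : in_O r (mu_r r i) by rewrite mui.
have Ovi : in_O r (w ^+ ((r - 1) * fi)) by [].
have muv : mu_r r i * w ^+ ((r - 1) * fi) = 1.
  by rewrite mui -exprD -mulSn subn1 prednK // exprM wr expr1n.
have mu0 : mu_r r i != 0 by apply: contra_eq_neq muv => ->; rewrite mul0r eq_sym oner_eq0.
have dif : mu_r r i - mu_r r j = mu_r r i * (1 - x) by rewrite muj mui mulrBr mulr1.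
have nx1 : 1 - x != 0 by rewrite subr_eq0 eq_sym.
have nw1 : 1 - w != 0 by rewrite subr_eq0 eq_sym.
split.
- have [S3 OS3 hS3] := geo (O_X 2 (Ow m)) px2 (prim_expr_order px).
  have S3i : (1 + x) * S3 = 1.
    apply: (mulfI nx1); rewrite mulrA -subr_sqr expr1n hS3 mulr1 //.
  apply: (assocO (u := mu_r r i + mu_r r j)).
  + by rewrite dif mulf_neq0.
  + by rewrite subr_sqr mulrC.
  apply: (unitO (v := w ^+ ((r - 1) * fi) * S3)).
  + by apply: Zadj_D => //; rewrite muj; apply: Zadj_M; apply: Ow.
  + exact: Zadj_M.
  by rewrite muj -mui -{1}[mu_r r i]mulr1 -mulrDr mulrACA muv mul1r S3i.
- have [S1 OS1 hS1] := geo (Ow 1%N) pw xr.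
  have [S2 OS2 hS2] := geo (Ow m) px wr.
  have S12 : S1 * S2 = 1.
    by apply: (mulfI nw1); rewrite mulrA hS1 hS2 mulr1.
  apply: (assocO (u := mu_r r i * S1)) => //.
  + by rewrite expr1 in hS1; rewrite dif -mulrA [S1 * _]mulrC hS1.
  apply: (unitO (v := w ^+ ((r - 1) * fi) * S2)).
  + exact: Zadj_M.
  + exact: Zadj_M.
  by rewrite mulrACA muv S12 mulr1.
Qed.
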